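(* Assume $\lambda_A>0$. Run TD-SVRG with i.i.d. sampling (Algorithm 3) with learning rate $\alpha=1/16$, inner-loop length $M=32/\lambda_A$ (assumed integer), a parameter $c>0$, and in epoch $m\ge1$ an estimation batch size $$n_m=\Big\lceil\frac{4f_e(\tilde\theta_{m-1})+2\sigma^2}{c\,\lambda_A\,(2/3)^{m}}\Big\rceil,\qquad \sigma^2=\sum_{s,s'}\mu(s)P(s,s')\|g_{s,s'}(\theta^* )\|^2.$$ Then there is a constant $C_1$ (independent of $m$) such that for every $m\ge0$, $$\mathbb E[f_e(\tilde\theta_m)]\le\left(\tfrac23\right)^m\big(f_e(\tilde\theta_0)+C_1\big).$$
   Context: Environment setting. Let $\mathcal S$ be a finite state space, $P$ an irreducible aperiodic transition matrix on $\mathcal S$ (induced by a fixed policy) with stationary distribution $\mu$, $\phi:\mathcal S\to\mathbb R^d$ a feature map with $\|\phi(s)\|_2\le1$ for all $s$, $r:\mathcal S\times\mathcal S\to\mathbb R$ a reward function and $\gamma\in[0,1)$. For states $s,s'$ and $\theta\in\mathbb R^d$ let $g_{s,s'}(\theta)=(r(s,s')+\gamma\phi(s')^T\theta-\phi(s)^T\theta)\phi(s)$. Let $A_e=\sum_{s,s'}\mu(s)P(s,s')\phi(s)(\phi(s)-\gamma\phi(s'))^T$ and $b_e=\sum_{s,s'}\mu(s)P(s,s')r(s,s')\phi(s)$; assume $A_e$ is nonsingular and let $\theta^*=A_e^{-1}b_e$. Let $\lambda_A$ be the minimum eigenvalue of $(A_e+A_e^T)/2$. Define $f_e(\theta)=(\theta-\theta^*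 )^TA_e(\theta-\theta^* )$. An i.i.d. sample is a pair $(s,s')$ with $s\sim\mu$ and then $s'\sim P(s,\cdot)$, drawn independently of all other samples. Algorithm 3 (TD-SVRG, i.i.d. sampling): given $\alpha>0$, integer $M\ge1$, batch sizes $n_m$ and initial $\tilde\theta_0$, for epochs $m=1,2,\dots$: set $\tilde\theta=\tilde\theta_{m-1}$; draw $n_m$ i.i.d. samples forming $\mathcal D^m$ and compute $g_m(\tilde\theta)=\frac1{n_m}\sum_{(s,s')\in\mathcal D^m}g_{s,s'}(\tilde\theta)$; set $\theta_0=\tilde\theta$; for $t=1,\dots,M$ draw a fresh i.i.d. sample $(s,s')$, put $v_t=g_{s,s'}(\theta_{t-1})-g_{s,s'}(\tilde\theta)+g_m(\tilde\theta)$, $\theta_t=\theta_{t-1}+\alpha v_t$; finally set $\tilde\theta_m=\theta_{t'}$ with $t'$ uniform on $\{0,\dots,M-1\}$, independent. *)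

(* Defs.v *)
From HB Require Import structures.
From mathcomp Require Import all_boot all_order all_algebra.
From mathcomp Require Import reals.
Set Implicit Arguments. Unset Strict Implicit. Unset Printing Implicit Defensive.
Import Order.TTheory GRing.Theory Num.Theory.
Local Open Scope ring_scope.

Section TDSVRG.
Variables (R : realType) (S : finType) (d : nat).
Variables (P : S -> S -> R) (mu : S -> R).
Variables (phi : S -> 'cV[R]_d) (r : S -> S -> R) (gamma : R).

Definition dotv (u v : 'cV[R]_d) : R := (u^T *m v) 0 0.

Fixpoint Pk (k : nat) (s s' : S) : R :=
  match k with
  | 0 => (s == s')%:R
  | k'.+1 => \sum_(u : S) Pk k' s u * P u s'
  end.

Definition stochastic : Prop :=
  (forall s s', 0 <= P s s') /\ (forall s, \sum_(s' : S) P s s' = 1).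

Definition irreducible : Prop :=
  forall s s', exists k, (0 < k)%N /\ 0 < Pk k s s'.

Definition aperiodic : Prop :=
  forall s (p : nat), (1 < p)%N ->
    exists k, [/\ (0 < k)%N, 0 < Pk k s s & ~~ (p %| k)%N].

Definition stationary : Prop :=
  [/\ forall s, 0 <= mu s, \sum_(s : S) mu s = 1
    & forall s', mu s' = \sum_(s : S) mu s * P s s'].

(* probability of an i.i.d. sample (s,s'): s ~ mu, s' ~ P(s,.) *)
Definition wpair (p : S * S) : R := mu p.1 * P p.1 p.2.

Definition gTD (p : S * S) (th : 'cV[R]_d) : 'cV[R]_d :=
  (r p.1 p.2 + gamma * dotv (phi p.2) th - dotv (phi p.1) th) *: phi p.1.

Definition A_e : 'M[R]_d :=
  \sum_(s : S) \sum_(s' : S) (mu s * P s s') *: (phi s *m (phi s - gamma *: phi s')^T).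

Definition b_e : 'cV[R]_d :=
  \sum_(s : S) \sum_(s' : S) (mu s * P s s' * r s s') *: phi s.

Definition theta_star : 'cV[R]_d := invmx A_e *m b_e.

Definition f_e (th : 'cV[R]_d) : R :=
  ((th - theta_star)^T *m A_e *m (th - theta_star)) 0 0.

Definition sigma2 : R :=
  \sum_(s : S) \sum_(s' : S) mu s * P s s' * dotv (gTD (s, s') theta_star) (gTD (s, s') theta_star).

Definition is_min_eigenvalue (A : 'M[R]_d) (lam : R) : Prop :=
  eigenvalue A lam /\ forall l, eigenvalue A l -> lam <= l.

Fixpoint inner_path (alpha : R) (tt gm : 'cV[R]_d) (th : 'cV[R]_d)
    (ws : seq (S * S)) : seq 'cV[R]_d :=
  match ws with
  | [::] => [:: th]
  | p :: ws' => th :: inner_path alpha tt gm (th + alpha *: (gTD p th - gTD p tt + gm)) ws'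
  end.

(* Expectation of h(tilde theta_m) after one epoch of Algorithm 3 with batch
   size n, inner-loop length M, step alpha, started at tilde theta = tt. *)
Definition epochE (alpha : R) (M n : nat) (tt : 'cV[R]_d) (h : 'cV[R]_d -> R) : R :=
  \sum_(D : {ffun 'I_n -> S * S}) (\prod_(i < n) wpair (D i)) *
    (let gm := n%:R^-1 *: \sum_(i < n) gTD (D i) tt in
     \sum_(W : {ffun 'I_M -> S * S}) (\prod_(i < M) wpair (W i)) *
       (M%:R^-1 * \sum_(t < M)
          h (nth 0 (inner_path alpha tt gm tt [seq W i | i <- enum 'I_M]) t))).

(* E[h(tilde theta_m)] when epoch k (k >= 1) uses batch size nb k (tilde theta_{k-1}),
   starting from the deterministic tilde theta_0 = th0. *)
Fixpoint expect_epochs (alpha : R) (M : nat) (nb : nat -> 'cV[R]_d -> nat)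
    (m : nat) (th0 : 'cV[R]_d) (h : 'cV[R]_d -> R) : R :=
  match m with
  | 0 => h th0
  | m'.+1 => expect_epochs alpha M nb m' th0
               (fun th => epochE alpha M (nb m'.+1 th) th h)
  end.

End TDSVRG.

(* Main.v *)
Require Import Defs.
From HB Require Import structures.
From mathcomp Require Import all_boot all_order all_algebra.
From mathcomp Require Import reals.
From mathcomp Require Import ring lra.
From mathcomp Require complex spectral sesquilinear.
Import Order.TTheory GRing.Theory Num.Theory.
Local Open Scope ring_scope.

Module SpecPart.
Import complex spectral sesquilinear.
Section Spec.
Variable R : realType.
Local Notation C := (R[i]).
Local Notation fC := (real_complex R).

Lemma realC_real (x : R) : (x%:C)%C \is Num.real.
Proof. by apply/complex_realP; exists x. Qed.

Lemma psd_min_eig n (H : 'M[R]_n) (lam : R) : H^T = H ->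
  (forall l, eigenvalue H l -> lam <= l) ->
  forall x : 'cV[R]_n, lam * (x^T *m x) 0 0 <= (x^T *m H *m x) 0 0.
Proof.
move=> Hsym Hmin x.
set HC : 'M[C]_n := map_mx fC H.
have Hherm : HC \is hermsymmx.
  rewrite qualifE /= expr0 scale1r; apply/eqP/matrixP => i j.
  rewrite !mxE conj_Creal ?realC_real //.
  by rewrite -[in LHS]Hsym mxE.
have Hnorm := hermitian_normalmx Hherm.
set P := spectralmx HC; set sp := spectral_diag HC.
have HCE : HC = invmx P *m diag_mx sp *m P by apply/orthomx_spectralP.
have Pu : P \is unitarymx := spectral_unitarymx HC.
have Punit : P \in unitmx := spectral_unit HC.
have PinvE : invmx P = (P ^t* )%sesqui by rewrite invmx_unitary.
have spR : forall i, sp 0 i \is Num.real.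
  by move=> i; have /mxOverP := hermitian_spectral_diag_real Hherm; apply.
have spE : forall i, sp 0 i = ((complex.Re (sp 0 i))%:C)%C.
  by move=> i; rewrite RRe_real.
have spge : forall i, lam <= complex.Re (sp 0 i).
  move=> i; apply: Hmin.
  have ev : eigenvalue HC (sp 0 i).
    apply/eigenvalueP.
    exists (row i P).
      rewrite -row_mul HCE !mulmxA mulmxV // mul1mx mul_diag_mx.
      by apply/rowP => j; rewrite !mxE.
    apply/eqP => /(congr1 (mulmx^~ (P ^t* )%sesqui)).
    rewrite -row_mul (unitarymxP Pu) mul0mx => /rowP /(_ i).
    by rewrite !mxE eqxx /= => /eqP; rewrite oner_eq0.
  move: ev; rewrite spE !eigenvalue_root_char -map_char_poly.
  by rewrite (fmorph_root fC).
rewrite -subr_ge0 -ler0c rmorphB rmorphM /=.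
set xC := map_mx fC x.
have E1 : fC ((x^T *m H *m x) 0 0) = (xC^T *m HC *m xC) 0 0.
  by rewrite /xC /HC map_trmx -!(map_mxM fC) [RHS]mxE.
have E2 : fC ((x^T *m x) 0 0) = (xC^T *m xC) 0 0.
  by rewrite /xC /HC map_trmx -!(map_mxM fC) [RHS]mxE.
rewrite E1 E2.
have xT : (xC ^t* )%sesqui = xC^T.
  by apply/matrixP => i j; rewrite !mxE conj_Creal ?realC_real.
set y := P *m xC.
have yT : (y ^t* )%sesqui = xC^T *m (P ^t* )%sesqui.
  by rewrite /y trmx_mul map_mxM xT.
have PP : (P ^t* )%sesqui *m P = 1%:M by rewrite -PinvE mulVmx.
have -> : xC^T *m HC *m xC = (y ^t* )%sesqui *m diag_mx sp *m y.
  by rewrite yT HCE PinvE /y !mulmxA.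
have -> : xC^T *m xC = (y ^t* )%sesqui *m y.
  by rewrite yT /y mulmxA -(mulmxA _ _ P) PP mulmx1.
rewrite mul_mx_diag !mxE big_distrr -sumrB /=.
clearbody y; apply: sumr_ge0 => k _; rewrite !mxE.
have -> : (y k 0)^* * sp 0 k * y k 0 - fC lam * ((y k 0)^* * y k 0)
   = (sp 0 k - fC lam) * (y k 0 * (y k 0)^*) by ring.
apply: mulr_ge0; last exact: mul_conjC_ge0.
by rewrite spE -rmorphB ler0c subr_ge0.
Qed.
End Spec.

End SpecPart.
Import SpecPart.

Set Implicit Arguments. Unset Strict Implicit. Unset Printing Implicit Defensive.

Section FF.
Variables (R : realType) (T : finType) (w : T -> R).

Definition fcons k (p : T) (W : {ffun 'I_k -> T}) : {ffun 'I_k.+1 -> T} :=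
  [ffun i => if unlift ord0 i is Some j then W j else p].
Arguments fcons {k}.

Lemma fcons0 k p (W : {ffun 'I_k -> T}) : fcons p W ord0 = p.
Proof. by rewrite ffunE unlift_none. Qed.

Lemma fconsS k p (W : {ffun 'I_k -> T}) j : fcons p W (lift ord0 j) = W j.
Proof. by rewrite ffunE liftK. Qed.

Lemma sum_ffunS k (F : seq T -> R) :
  \sum_(W : {ffun 'I_k.+1 -> T}) (\prod_i w (W i)) * F [seq W i | i <- enum 'I_k.+1]
  = \sum_p w p * \sum_(W : {ffun 'I_k -> T})
       (\prod_i w (W i)) * F (p :: [seq W i | i <- enum 'I_k]).
Proof.
rewrite (reindex (fun pw : T * {ffun 'I_k -> T} => fcons pw.1 pw.2)) /=.
  rewrite -(pair_bigA _ (fun p (W : {ffun 'I_k -> T}) =>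
     (\prod_i w (fcons p W i)) * F [seq fcons p W i | i <- enum 'I_k.+1])) /=.
  apply: eq_bigr => p _; rewrite mulr_sumr; apply: eq_bigr => W _.
  rewrite big_ord_recl fcons0 enum_ordSl /= fcons0 -map_comp.
  under eq_bigr do rewrite fconsS.
  under eq_map do rewrite /= fconsS.
  by rewrite mulrA.
apply: onW_bij.
exists (fun W : {ffun 'I_k.+1 -> T} => (W ord0, [ffun j => W (lift ord0 j)])).
  by case=> p W /=; rewrite fcons0; congr pair; apply/ffunP => j; rewrite ffunE fconsS.
move=> W /=; apply/ffunP => i; rewrite ffunE.
by case: unliftP => [j ->|->]; rewrite ?ffunE.
Qed.

Lemma sum_ffun_prod n (h : 'I_n -> T -> R) :
  \sum_(D : {ffun 'I_n -> T}) (\prod_i w (D i)) * \prod_i h i (D i)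
  = \prod_i \sum_p w p * h i p.
Proof.
rewrite (bigA_distr_bigA (fun i p => w p * h i p)) /=.
by apply: eq_bigr => D _; rewrite big_split.
Qed.

Hypothesis w1 : \sum_p w p = 1.

Lemma sum_ffun_mass n : \sum_(D : {ffun 'I_n -> T}) \prod_i w (D i) = 1.
Proof.
transitivity (\sum_(D : {ffun 'I_n -> T}) (\prod_i w (D i)) *
                \prod_(i < n) (fun (_ : 'I_n) (_ : T) => 1 : R) i (D i)).
  by apply: eq_bigr => D _; rewrite [X in _ * X]big1 ?mulr1.
rewrite (sum_ffun_prod (fun (_ : 'I_n) (_ : T) => 1 : R)); apply: big1 => i _; under eq_bigr do rewrite mulr1; exact: w1.
Qed.

Lemma sum_ffun_ind n i (q : T) :
  \sum_(D : {ffun 'I_n -> T}) (\prod_k w (D k)) * (D i == q)%:R = w q.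
Proof.
pose h := fun (k : 'I_n) (p : T) => if k == i then (p == q)%:R else 1 : R.
transitivity (\sum_(D : {ffun 'I_n -> T}) (\prod_k w (D k)) * \prod_k h k (D k)).
  apply: eq_bigr => D _; congr (_ * _).
  by rewrite (bigD1 i) //= /h eqxx big1 ?mulr1 // => k /negbTE ->.
rewrite sum_ffun_prod (bigD1 i) //= {1}/h eqxx [X in _ * X]big1 ?mulr1.
  by rewrite (bigD1 q) //= eqxx mulr1 big1 ?addr0 // => p /negbTE ->; rewrite mulr0.
by move=> k /negbTE kn; rewrite /h kn; under eq_bigr do rewrite mulr1.
Qed.

Lemma sum_ffun_ind2 n i j (q q' : T) : i != j ->
  \sum_(D : {ffun 'I_n -> T}) (\prod_k w (D k)) * ((D i == q)%:R * (D j == q')%:R)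
   = w q * w q'.
Proof.
move=> nij.
pose h := fun (k : 'I_n) (p : T) => if k == i then (p == q)%:R
                                   else if k == j then (p == q')%:R else 1 : R.
have nji : (j == i) = false by rewrite eq_sym (negbTE nij).
transitivity (\sum_(D : {ffun 'I_n -> T}) (\prod_k w (D k)) * \prod_k h k (D k)).
  apply: eq_bigr => D _; congr (_ * _).
  rewrite (bigD1 i) //= (bigD1 j) ?nji //= /h eqxx nji eqxx.
  by rewrite big1 ?mulr1 // => k /andP[/negbTE -> /negbTE ->].
rewrite sum_ffun_prod (bigD1 i) //= (bigD1 j) ?nji //= {1 2}/h eqxx nji eqxx.
rewrite [X in _ * (_ * X)]big1 ?mulr1.
  rewrite (bigD1 q) //= eqxx mulr1 big1 ?addr0; last first.
    by move=> p /negbTE ->; rewrite mulr0.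
  rewrite (bigD1 q') //= eqxx mulr1 big1 ?addr0 //.
  by move=> p /negbTE ->; rewrite mulr0.
move=> k /andP[/negbTE k1 /negbTE k2]; rewrite /h k1 k2.
by under eq_bigr do rewrite mulr1.
Qed.

Lemma sum_ffun_marg n i (H : T -> R) :
  \sum_(D : {ffun 'I_n -> T}) (\prod_k w (D k)) * H (D i) = \sum_p w p * H p.
Proof.
have E : forall D : {ffun 'I_n -> T}, H (D i) = \sum_q H q * (D i == q)%:R.
  by move=> D; rewrite (bigD1 (D i)) //= eqxx mulr1 big1 ?addr0 // => q; rewrite eq_sym => /negbTE ->; rewrite mulr0.
under eq_bigr do rewrite E mulr_sumr.
rewrite exchange_big /=; apply: eq_bigr => q _.
under eq_bigr do rewrite mulrCA.
by rewrite -mulr_sumr sum_ffun_ind mulrC.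
Qed.

Lemma sum_ffun_marg2 n i j (H : T -> T -> R) : i != j ->
  \sum_(D : {ffun 'I_n -> T}) (\prod_k w (D k)) * H (D i) (D j)
   = \sum_p \sum_q w p * w q * H p q.
Proof.
move=> nij.
have E : forall D : {ffun 'I_n -> T}, H (D i) (D j) =
   \sum_p \sum_q H p q * ((D i == p)%:R * (D j == q)%:R).
  move=> D; rewrite (bigD1 (D i)) //= [X in _ + X]big1 ?addr0; last first.
    move=> p; rewrite eq_sym => /negbTE ne; apply: big1 => q _.
    by rewrite ne mul0r mulr0.
  rewrite (bigD1 (D j)) //= !eqxx !mulr1 [X in _ + X]big1 ?addr0 //.
  by move=> q; rewrite eq_sym => /negbTE ->; rewrite !mulr0.
under eq_bigr do rewrite E mulr_sumr.
rewrite exchange_big /=; apply: eq_bigr => p _.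
under eq_bigr do rewrite mulr_sumr.
rewrite exchange_big /=; apply: eq_bigr => q _.
under eq_bigr do rewrite mulrCA.
by rewrite -mulr_sumr sum_ffun_ind2 // mulrC.
Qed.

End FF.

Section Dot.
Variables (R : realType) (d : nat).
Implicit Types u v x y : 'cV[R]_d.

Lemma dotvE u v : dotv u v = \sum_i u i 0 * v i 0.
Proof. by rewrite /dotv mxE; apply: eq_bigr => i _; rewrite mxE. Qed.

Lemma dotvC u v : dotv u v = dotv v u.
Proof. by rewrite !dotvE; apply: eq_bigr => i _; rewrite mulrC. Qed.

Lemma dotvDr u v x : dotv u (v + x) = dotv u v + dotv u x.
Proof. by rewrite !dotvE -big_split; apply: eq_bigr => i _; rewrite mxE mulrDr. Qed.

Lemma dotvDl u v x : dotv (v + x) u = dotv v u + dotv x u.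
Proof. by rewrite dotvC dotvDr !(dotvC u). Qed.

Lemma dotvZr a u v : dotv u (a *: v) = a * dotv u v.
Proof. by rewrite !dotvE mulr_sumr; apply: eq_bigr => i _; rewrite mxE mulrCA. Qed.

Lemma dotvZl a u v : dotv (a *: v) u = a * dotv v u.
Proof. by rewrite dotvC dotvZr dotvC. Qed.

Lemma dotvNr u v : dotv u (- v) = - dotv u v.
Proof. by rewrite -scaleN1r dotvZr mulN1r. Qed.

Lemma dotvNl u v : dotv (- v) u = - dotv v u.
Proof. by rewrite dotvC dotvNr dotvC. Qed.

Lemma dotvBr u v x : dotv u (v - x) = dotv u v - dotv u x.
Proof. by rewrite dotvDr dotvNr. Qed.

Lemma dotvBl u v x : dotv (v - x) u = dotv v u - dotv x u.
Proof. by rewrite dotvDl dotvNl. Qed.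

Lemma dotv0r u : dotv u 0 = 0.
Proof. by rewrite dotvE big1 // => i _; rewrite mxE mulr0. Qed.

Lemma dotv_ge0 u : 0 <= dotv u u.
Proof. by rewrite dotvE; apply: sumr_ge0 => i _; rewrite -expr2 sqr_ge0. Qed.

Lemma dotv_sumr (I : finType) u (c : I -> R) (v : I -> 'cV[R]_d) :
  dotv u (\sum_i c i *: v i) = \sum_i c i * dotv u (v i).
Proof.
rewrite dotvE; under eq_bigr do rewrite summxE mulr_sumr.
rewrite exchange_big /=; apply: eq_bigr => j _.
by rewrite dotvE mulr_sumr; apply: eq_bigr => i _; rewrite mxE mulrCA.
Qed.

Lemma dotv_young (eta : R) u v : 0 < eta ->
  2 * dotv u v <= eta * dotv u u + eta^-1 * dotv v v.
Proof.
move=> eta0; have := dotv_ge0 (eta *: u - v).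
rewrite !dotvBl !dotvBr !dotvZl !dotvZr (dotvC v u) => H.
have: eta * (2 * dotv u v) <= eta * (eta * dotv u u + eta^-1 * dotv v v).
  rewrite mulrDr (mulrA eta eta^-1) mulfV ?gt_eqF // mul1r; lra.
by rewrite ler_pM2l.
Qed.

Lemma dotv_par u v : dotv (u + v) (u + v) <= 2 * dotv u u + 2 * dotv v v.
Proof.
have := dotv_ge0 (u - v).
rewrite !dotvBl !dotvBr !dotvDl !dotvDr (dotvC v u); lra.
Qed.

Lemma mulmx_1x1 (v : 'cV[R]_d) (M : 'M[R]_1) : v *m M = M 0 0 *: v.
Proof. by apply/matrixP => i j; rewrite !mxE big_ord1 (ord1 j) mulrC. Qed.

End Dot.

Section Alg.
Variables (R : realType) (S : finType) (d : nat).
Variables (P : S -> S -> R) (mu : S -> R).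
Variables (phi : S -> 'cV[R]_d) (r : S -> S -> R) (gamma : R).
Hypothesis Hst : stochastic P.
Hypothesis Hstat : stationary P mu.

Local Notation w := (wpair P mu).
Local Notation A := (A_e P mu phi gamma).
Local Notation ths := (theta_star P mu phi r gamma).
Local Notation g := (gTD phi r gamma).
Local Notation f := (f_e P mu phi r gamma).

Definition dl (p : S * S) (x : 'cV[R]_d) : 'cV[R]_d :=
  (gamma * dotv (phi p.2) x - dotv (phi p.1) x) *: phi p.1.

Lemma w_ge0 p : 0 <= w p.
Proof.
case: Hst => P0 _; case: Hstat => m0 _ _.
exact: mulr_ge0 (m0 _) (P0 _ _).
Qed.

Lemma sum_pair (V : nmodType) (F : S * S -> V) : \sum_p F p = \sum_s \sum_s' F (s, s').
Proof. by rewrite pair_bigA; apply: eq_bigr => -[]. Qed.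

Lemma w_sum : \sum_p w p = 1.
Proof.
case: Hst => _ P1; case: Hstat => _ m1 _.
rewrite sum_pair -m1; apply: eq_bigr => s _.
by rewrite /wpair /= -mulr_sumr P1 mulr1.
Qed.

Lemma ex_stat (h : S -> R) :
  \sum_p w p * h p.2 = \sum_p w p * h p.1.
Proof.
case: Hst => _ P1; case: Hstat => _ _ mst.
rewrite !sum_pair /wpair /=.
transitivity (\sum_s' mu s' * h s').
  rewrite exchange_big /=; apply: eq_bigr => s' _.
  by rewrite mst mulr_suml.
apply: eq_bigr => s _.
by rewrite -mulr_suml -mulr_sumr P1 mulr1.
Qed.

Lemma gE p th : g p th = r p.1 p.2 *: phi p.1 + dl p th.
Proof. by rewrite /gTD /dl -scalerDl addrA. Qed.

Lemma dlB p x y : dl p (x - y) = dl p x - dl p y.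
Proof. by rewrite /dl -scalerBl !dotvBr; congr (_ *: _); ring. Qed.

Lemma Ax_E x : A *m x = - \sum_p w p *: dl p x.
Proof.
rewrite /A_e mulmx_suml sum_pair -sumrN; apply: eq_bigr => s _.
rewrite mulmx_suml -sumrN; apply: eq_bigr => s' _.
rewrite -scalemxAl -mulmxA mulmx_1x1 /dl /wpair /=.
have -> : ((phi s - gamma *: phi s')^T *m x) 0 0
    = dotv (phi s) x - gamma * dotv (phi s') x by rewrite -dotvZl -dotvBl.
rewrite -scalerN -scaleNr; congr (_ *: (_ *: _)); ring.
Qed.

Lemma b_eE : b_e P mu phi r = \sum_p w p *: (r p.1 p.2 *: phi p.1).
Proof.
rewrite /b_e sum_pair; apply: eq_bigr => s _; apply: eq_bigr => s' _.
by rewrite scalerA.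
Qed.

Hypothesis HAu : A \in unitmx.

Lemma gbar th : \sum_p w p *: g p th = - (A *m (th - ths)).
Proof.
under eq_bigr do rewrite gE scalerDr.
rewrite big_split /= -b_eE.
have -> : b_e P mu phi r = A *m ths by rewrite /theta_star mulKVmx.
by rewrite mulmxBr opprB -[X in _ + X]opprK -Ax_E addrC.
Qed.

Lemma dl_mean x : \sum_p w p *: dl p x = - (A *m x).
Proof. by rewrite Ax_E opprK. Qed.

Lemma fE th : f th = dotv (th - ths) (A *m (th - ths)).
Proof. by rewrite /f_e /dotv mulmxA. Qed.

Hypothesis Hphi : forall s, dotv (phi s) (phi s) <= 1.
Hypothesis Hg0 : 0 <= gamma.
Hypothesis Hg1 : gamma < 1.

Lemma dl_quad x :
  \sum_p w p * dotv (dl p x) (dl p x) <= 2 * dotv x (A *m x).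
Proof.
pose a (p : S * S) := dotv (phi p.1) x; pose b (p : S * S) := dotv (phi p.2) x.
have Hs : \sum_p w p * (b p ^+ 2) = \sum_p w p * (a p ^+ 2).
  exact: (ex_stat (fun s => dotv (phi s) x ^+ 2)).
have N0 : 0 <= \sum_p w p * (a p ^+ 2).
  by apply: sumr_ge0 => p _; rewrite mulr_ge0 ?w_ge0 ?sqr_ge0.
have HAx : dotv x (A *m x) = \sum_p w p * (a p ^+ 2 - gamma * (a p * b p)).
  rewrite Ax_E dotvNr dotv_sumr -sumrN; apply: eq_bigr => p _.
  rewrite /dl dotvZr (dotvC x (phi p.1)) -/(a p) -/(b p); ring.
have H1 : \sum_p w p * dotv (dl p x) (dl p x) <=
          \sum_p w p * ((gamma * b p - a p) ^+ 2).
  apply: ler_sum => p _; apply: ler_wpM2l; first exact: w_ge0.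
  rewrite /dl dotvZl dotvZr mulrA -expr2 -/(a p) -/(b p).
  by rewrite ler_piMr ?sqr_ge0.
apply: (le_trans H1); rewrite HAx.
have E : forall p, w p * ((gamma * b p - a p) ^+ 2) =
   2 * (w p * (a p ^+ 2 - gamma * (a p * b p))) - (1 - gamma ^+ 2) * (w p * (a p ^+ 2))
   + gamma ^+ 2 * (w p * (b p ^+ 2) - w p * (a p ^+ 2)).
  by move=> p; ring.
under eq_bigr do rewrite E.
rewrite big_split /= big_split /= -!mulr_sumr sumrB Hs subrr mulr0 addr0.
have : 0 <= (1 - gamma ^+ 2) * \sum_p w p * (a p ^+ 2).
  by rewrite mulr_ge0 // subr_ge0 expr_le1 // ltW.
rewrite sumrN -mulr_sumr; lra.
Qed.


Lemma posdef lam x : is_min_eigenvalue ((1 / 2 : R) *: (A + A^T)) lam ->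
  lam * dotv x x <= dotv x (A *m x).
Proof.
case=> _ Hmin.
have Hsym : ((1 / 2 : R) *: (A + A^T))^T = (1 / 2 : R) *: (A + A^T).
  by rewrite linearZ /= linearD /= trmxK addrC.
have := @psd_min_eig R d ((1 / 2 : R) *: (A + A^T)) lam Hsym Hmin x.
have E : (x^T *m A^T *m x) = (x^T *m A *m x)^T by rewrite !trmx_mul trmxK mulmxA.
rewrite -scalemxAr -scalemxAl mulmxDr mulmxDl E.
have -> : dotv x (A *m x) = (x^T *m A *m x) 0 0 by rewrite /dotv mulmxA.
rewrite /dotv; set q := x^T *m A *m x; set n2 := x^T *m x; clearbody q n2.
rewrite !mxE; lra.
Qed.


Lemma dotv_expand (x u : 'cV[R]_d) a :
  dotv (x + a *: u) (x + a *: u) = dotv x x + 2 * a * dotv x u + a ^+ 2 * dotv u u.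
Proof. by rewrite !dotvDl !dotvDr !dotvZl !dotvZr (dotvC u x); ring. Qed.

Definition ex (F : S * S -> R) := \sum_p w p * F p.

Lemma exD F G : ex (fun p => F p + G p) = ex F + ex G.
Proof. by rewrite /ex -big_split; apply: eq_bigr => p _; rewrite mulrDr. Qed.

Lemma exZ k F : ex (fun p => k * F p) = k * ex F.
Proof. by rewrite /ex mulr_sumr; apply: eq_bigr => p _; rewrite mulrCA. Qed.

Lemma exC k : ex (fun _ => k) = k.
Proof. by rewrite /ex -mulr_suml w_sum mul1r. Qed.

Lemma exN F : ex (fun p => - F p) = - ex F.
Proof. by rewrite /ex -sumrN; apply: eq_bigr => p _; rewrite mulrN. Qed.

Lemma exB F G : ex (fun p => F p - G p) = ex F - ex G.
Proof. by rewrite exD exN. Qed.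

Lemma ex_le F G : (forall p, F p <= G p) -> ex F <= ex G.
Proof. by move=> H; apply: ler_sum => p _; apply: ler_wpM2l; [exact: w_ge0 | exact: H]. Qed.

Lemma ex_dot_dl x y : ex (fun p => dotv x (dl p y)) = - dotv x (A *m y).
Proof. by rewrite /ex -dotv_sumr dl_mean dotvNr. Qed.

Lemma ex_dl2 th : ex (fun p => dotv (dl p (th - ths)) (dl p (th - ths))) <= 2 * f th.
Proof. by rewrite fE; apply: dl_quad. Qed.

Variables (lam : R).
Hypothesis Hlam : is_min_eigenvalue ((1 / 2 : R) *: (A + A^T)) lam.
Hypothesis Hlam0 : 0 < lam.

Section Inner.
Variables (tt gm : 'cV[R]_d).
Definition alpha : R := 1 / 16.
Definition step p th := th + alpha *: (g p th - g p tt + gm).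
Definition ee := dotv (gm + A *m (tt - ths)) (gm + A *m (tt - ths)).
Definition Bc := f tt / 64 + lam^-1 * ee / 8 + ee / 128.

Lemma step_bound th :
  ex (fun p => dotv (step p th - ths) (step p th - ths))
    <= dotv (th - ths) (th - ths) - 5 / 64 * f th + Bc.
Proof.
set x := th - ths; set xt := tt - ths; set e := gm + A *m xt.
pose u p := dl p x - dl p xt + gm.
have Hs : forall p, step p th - ths = x + alpha *: u p.
  move=> p.
  have Hg : g p th - g p tt = dl p x - dl p xt.
    rewrite !gE opprD addrACA subrr add0r -!dlB /x /xt; congr (dl p _).
    by rewrite opprB addrA subrK.
  by rewrite /step Hg addrAC.
have Hexp : forall p, dotv (step p th - ths) (step p th - ths) =
    dotv x x + 2 * alpha * dotv x (u p) + alpha ^+ 2 * dotv (u p) (u p).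
  by move=> p; rewrite Hs dotv_expand.
have -> : ex (fun p => dotv (step p th - ths) (step p th - ths)) =
  ex (fun p => dotv x x + 2 * alpha * dotv x (u p) + alpha ^+ 2 * dotv (u p) (u p)).
  by apply: eq_bigr => p _; rewrite Hexp.
rewrite !exD exC !exZ.
have Ha : ex (fun p => dotv x (u p)) = - f th + dotv x e.
  rewrite /ex /u.
  under eq_bigr do rewrite !dotvDr dotvNr.
  rewrite -/(ex (fun p => dotv x (dl p x) + - dotv x (dl p xt) + dotv x gm)).
  rewrite !exD exN exC !ex_dot_dl fE -/x /e dotvDr; ring.
have Hb : ex (fun p => dotv (u p) (u p)) <= 4 * f th + 4 * f tt + 2 * ee.
  have H1 : forall p, dotv (u p) (u p) <=
      2 * dotv (dl p x) (dl p x) + 2 * dotv (gm - dl p xt) (gm - dl p xt).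
    by move=> p; rewrite /u -addrA [- _ + _]addrC; apply: dotv_par.
  apply: (le_trans (ex_le H1)); rewrite exD !exZ.
  have H2 : ex (fun p => dotv (gm - dl p xt) (gm - dl p xt)) =
      dotv gm gm + 2 * dotv gm (A *m xt) + ex (fun p => dotv (dl p xt) (dl p xt)).
    have E : forall p, dotv (gm - dl p xt) (gm - dl p xt) =
       dotv gm gm - 2 * dotv gm (dl p xt) + dotv (dl p xt) (dl p xt).
      by move=> p; rewrite !dotvBl !dotvBr (dotvC (dl p xt) gm); ring.
    rewrite /ex; under eq_bigr do rewrite E.
    rewrite -/(ex (fun p => dotv gm gm - 2 * dotv gm (dl p xt) + dotv (dl p xt) (dl p xt))).
    by rewrite exD exB exC exZ ex_dot_dl /ex; ring.
  have H3 : dotv gm gm + 2 * dotv gm (A *m xt) <= ee.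
    rewrite /ee -/xt !dotvDl !dotvDr (dotvC (A *m xt) gm).
    have := dotv_ge0 (A *m xt); lra.
  have H4 := ex_dl2 th; have H5 := ex_dl2 tt.
  rewrite -/x -/xt in H4 H5; lra.
have Hc : 2 * dotv x e <= 1 / 2 * (lam * dotv x x) + 2 * (lam^-1 * ee).
  have hl : 0 < lam / 2 by rewrite divr_gt0.
  have := dotv_young x e hl; rewrite invf_div => H.
  apply: (le_trans H); rewrite /ee -/xt -/e.
  suff -> : lam / 2 * dotv x x + 2 / lam * dotv e e
          = 1 / 2 * (lam * dotv x x) + 2 * (lam^-1 * dotv e e) by [].
  ring.
have Hd : lam * dotv x x <= f th by rewrite fE -/x; apply: posdef.
rewrite Ha /alpha /Bc.
set Q1 := lam * dotv x x in Hc Hd *; set Q2 := lam^-1 * ee in Hc *.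
set a1 := ex _ in Hb *.
lra.
Qed.


Definition psum k th (W : {ffun 'I_k -> S * S}) :=
  \sum_(t < k) f (nth 0 (inner_path phi r gamma alpha tt gm th [seq W i | i <- enum 'I_k]) t).

Lemma inner_sum k th :
  5 / 64 * (\sum_(W : {ffun 'I_k -> S * S}) (\prod_i w (W i)) * psum th W)
   <= dotv (th - ths) (th - ths) + k%:R * Bc.
Proof.
elim: k th => [|k IH] th.
  have -> : \sum_(W : {ffun 'I_0 -> S * S}) (\prod_i w (W i)) * psum th W = 0.
    by apply: big1 => W _; rewrite /psum !big_ord0 mulr0.
  by rewrite mulr0 mul0r addr0 dotv_ge0.
have -> : \sum_(W : {ffun 'I_k.+1 -> S * S}) (\prod_i w (W i)) * psum th W
  = \sum_p w p * (f th + \sum_(W : {ffun 'I_k -> S * S}) (\prod_i w (W i)) * psum (step p th) W).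
  rewrite /psum (sum_ffunS w k (fun ws => \sum_(t < k.+1)
      f (nth 0 (inner_path phi r gamma alpha tt gm th ws) t))).
  apply: eq_bigr => p _; congr (_ * _).
  under eq_bigr do rewrite big_ord_recl /= mulrDr.
  by rewrite big_split /= -mulr_suml (sum_ffun_mass w_sum) mul1r.
rewrite mulr_sumr.
have H : forall p, 5 / 64 * (w p * (f th + \sum_(W : {ffun 'I_k -> S * S}) (\prod_i w (W i)) * psum (step p th) W))
   <= w p * (5 / 64 * f th + (dotv (step p th - ths) (step p th - ths) + k%:R * Bc)).
  move=> p; rewrite mulrCA; apply: ler_wpM2l; first exact: w_ge0.
  by rewrite mulrDr lerD2l IH.
apply: (le_trans (ler_sum _ (fun p _ => H p))).
rewrite -/(ex (fun p => 5 / 64 * f th + (dotv (step p th - ths) (step p th - ths) + k%:R * Bc))).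
rewrite !exD !exC.
have := step_bound th; rewrite -natr1; lra.
Qed.


Lemma inner_avg (M : nat) : M%:R = 32 / lam ->
  \sum_(W : {ffun 'I_M -> S * S}) (\prod_i w (W i)) *
     (M%:R^-1 * \sum_(t < M) f (nth 0 (inner_path phi r gamma alpha tt gm tt
                                      [seq W i | i <- enum 'I_M]) t))
  <= 3 / 5 * f tt + (8 / 5 * lam^-1 + 1 / 10) * ee.
Proof.
move=> HM.
have hX := inner_sum M tt.
set X := \sum_(W : {ffun 'I_M -> S * S}) _ in hX.
have -> : \sum_(W : {ffun 'I_M -> S * S}) (\prod_i w (W i)) *
     (M%:R^-1 * \sum_(t < M) f (nth 0 (inner_path phi r gamma alpha tt gm tt
                                      [seq W i | i <- enum 'I_M]) t)) = M%:R^-1 * X.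
  by rewrite /X mulr_sumr; apply: eq_bigr => W _; rewrite mulrCA.
rewrite HM invf_div.
have l32 : 0 <= lam / 32 by rewrite divr_ge0 // ltW.
have h1 := ler_wpM2l l32 hX.
have e1 : lam / 32 * (dotv (tt - ths) (tt - ths) + M%:R * Bc)
   = lam * dotv (tt - ths) (tt - ths) / 32 + Bc.
  rewrite HM mulrDr mulrA; congr (_ + _); first by rewrite mulrAC.
  have -> : lam / 32 * (32 / lam) = 1 by field; rewrite gt_eqF.
  by rewrite mul1r.
rewrite e1 in h1.
have h2 : lam * dotv (tt - ths) (tt - ths) <= f tt.
  by rewrite fE; apply: posdef.
rewrite /Bc in h1.
set N := lam * dotv (tt - ths) (tt - ths) in h1 h2.
have -> : (8 / 5 * lam^-1 + 1 / 10) * ee = 8 / 5 * (lam^-1 * ee) + ee / 10 by ring.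
set Q := lam^-1 * ee in h1 *.
lra.
Qed.

End Inner.

Lemma dotv_suml (I : finType) u (v : I -> 'cV[R]_d) :
  dotv u (\sum_i v i) = \sum_i dotv u (v i).
Proof.
have := dotv_sumr u (fun _ => 1) v; under eq_bigr do rewrite scale1r.
by move=> ->; apply: eq_bigr => i _; rewrite mul1r.
Qed.

Lemma dotv_sumlr (I : finType) (u v : I -> 'cV[R]_d) :
  dotv (\sum_i u i) (\sum_j v j) = \sum_i \sum_j dotv (u i) (v j).
Proof.
rewrite dotvC dotv_suml; under eq_bigr do rewrite dotvC dotv_suml.
by rewrite exchange_big.
Qed.

Section Batch.
Variable tt : 'cV[R]_d.
Let gb := \sum_p w p *: g p tt.
Let z p := g p tt - gb.
Let G2 := ex (fun p => dotv (g p tt) (g p tt)).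

Lemma z_mean : \sum_p w p *: z p = 0.
Proof.
rewrite /z; under eq_bigr do rewrite scalerBr.
by rewrite sumrB -scaler_suml w_sum scale1r subrr.
Qed.

Lemma ex_zz : ex (fun p => dotv (z p) (z p)) = G2 - dotv gb gb.
Proof.
have E : forall p, dotv (z p) (z p) = dotv (g p tt) (g p tt) - 2 * dotv gb (g p tt) + dotv gb gb.
  by move=> p; rewrite /z !dotvBl !dotvBr (dotvC (g p tt) gb); ring.
rewrite /ex; under eq_bigr do rewrite E.
rewrite -/(ex (fun p => dotv (g p tt) (g p tt) - 2 * dotv gb (g p tt) + dotv gb gb)).
rewrite exD exB exC exZ /ex -dotv_sumr -/gb /G2 /ex; ring.
Qed.

Lemma gb_le : dotv gb gb <= G2.
Proof.
have : 0 <= ex (fun p => dotv (z p) (z p)).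
  by apply: sumr_ge0 => p _; rewrite mulr_ge0 ?w_ge0 ?dotv_ge0.
rewrite ex_zz; lra.
Qed.

Lemma gb_E : gb = - (A *m (tt - ths)).
Proof. exact: gbar. Qed.

Lemma batch_pos n : (0 < n)%N ->
  n%:R * (\sum_(D : {ffun 'I_n -> S * S}) (\prod_i w (D i)) *
    dotv (n%:R^-1 *: \sum_i g (D i) tt + A *m (tt - ths))
         (n%:R^-1 *: \sum_i g (D i) tt + A *m (tt - ths))) <= G2.
Proof.
move=> n0.
have nz : n%:R != 0 :> R by rewrite pnatr_eq0 -lt0n.
have eD : forall D : {ffun 'I_n -> S * S},
  n%:R^-1 *: \sum_i g (D i) tt + A *m (tt - ths) = n%:R^-1 *: \sum_i z (D i).
  move=> D; rewrite -[A *m _]opprK -gb_E /z sumrB scalerBr; congr (_ + _).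
  by rewrite sumr_const card_ord -scaler_nat scalerA mulVf // scale1r.
under eq_bigr do rewrite eD dotvZl dotvZr dotv_sumlr.
have -> : \sum_(D : {ffun 'I_n -> S * S}) (\prod_i w (D i)) *
     (n%:R^-1 * (n%:R^-1 * \sum_i \sum_j dotv (z (D i)) (z (D j))))
  = n%:R^-1 * (n%:R^-1 * \sum_i \sum_j \sum_(D : {ffun 'I_n -> S * S})
       (\prod_k w (D k)) * dotv (z (D i)) (z (D j))).
  under eq_bigr do rewrite mulrCA [X in _ * X]mulrCA.
  rewrite -!mulr_sumr; congr (_ * (_ * _)).
  under eq_bigr do rewrite mulr_sumr.
  rewrite exchange_big; apply: eq_bigr => i _.
  under eq_bigr do rewrite mulr_sumr.
  by rewrite exchange_big.
have Hij : forall i j : 'I_n, i != j ->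
  \sum_(D : {ffun 'I_n -> S * S}) (\prod_k w (D k)) * dotv (z (D i)) (z (D j)) = 0.
  move=> i j nij.
  rewrite (sum_ffun_marg2 w_sum (fun p q => dotv (z p) (z q)) nij).
  apply: big1 => p _.
  under eq_bigr do rewrite -mulrA.
  by rewrite -mulr_sumr -dotv_sumr z_mean dotv0r mulr0.
have Hii : forall i : 'I_n,
  \sum_(D : {ffun 'I_n -> S * S}) (\prod_k w (D k)) * dotv (z (D i)) (z (D i))
  = ex (fun p => dotv (z p) (z p)).
  by move=> i; rewrite (sum_ffun_marg w_sum i (fun p => dotv (z p) (z p))).
have -> : \sum_(i < n) \sum_(j < n) \sum_(D : {ffun 'I_n -> S * S})
      (\prod_k w (D k)) * dotv (z (D i)) (z (D j)) = n%:R * ex (fun p => dotv (z p) (z p)).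
  have -> : n%:R * ex (fun p => dotv (z p) (z p)) = \sum_(i < n) ex (fun p => dotv (z p) (z p)).
    by rewrite sumr_const card_ord mulr_natl.
  apply: eq_bigr => i _.
  rewrite (bigD1 i) //= Hii big1 ?addr0 // => j ji.
  by apply: Hij; rewrite eq_sym.
rewrite ex_zz mulVKf // mulKf //.
have := dotv_ge0 gb; lra.
Qed.


Lemma G2_le : G2 <= 2 * sigma2 P mu phi r gamma + 4 * f tt.
Proof.
have E : forall p, g p tt = g p ths + dl p (tt - ths).
  by move=> p; rewrite !gE dlB addrACA subrr addr0.
have H1 : forall p, dotv (g p tt) (g p tt) <=
   2 * dotv (g p ths) (g p ths) + 2 * dotv (dl p (tt - ths)) (dl p (tt - ths)).
  by move=> p; rewrite E; apply: dotv_par.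
apply: (le_trans (ex_le H1)); rewrite exD !exZ.
have -> : ex (fun p => dotv (g p ths) (g p ths)) = sigma2 P mu phi r gamma.
  by rewrite /ex sum_pair /sigma2; apply: eq_bigr => s _; apply: eq_bigr => s' _.
have := ex_dl2 tt; lra.
Qed.

End Batch.

Lemma batch_E n tt D0 : 0 < D0 ->
  4 * f tt + 2 * sigma2 P mu phi r gamma <= n%:R * D0 ->
  \sum_(D : {ffun 'I_n -> S * S}) (\prod_i w (D i)) *
     ee tt (n%:R^-1 *: \sum_i g (D i) tt) <= D0.
Proof.
move=> D00 HnD.
have HG := G2_le tt.
case: n HnD => [|n] HnD.
  have -> : \sum_(D : {ffun 'I_0 -> S * S}) (\prod_i w (D i)) *
     ee tt (0%:R^-1 *: \sum_i g (D i) tt) =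
     \sum_(D : {ffun 'I_0 -> S * S}) (\prod_i w (D i)) * dotv (A *m (tt - ths)) (A *m (tt - ths)).
    by apply: eq_bigr => D _; rewrite /ee [\sum_(i < 0) _]big_ord0 scaler0 add0r.
  rewrite -mulr_suml (sum_ffun_mass w_sum) mul1r.
  have := gb_le tt; rewrite gb_E dotvNl dotvNr opprK.
  move: HnD; rewrite mul0r; lra.
have n0 : (0 < n.+1)%N by [].
have := batch_pos tt n0.
rewrite -/(ee tt _).
move=> H; have H2 : n.+1%:R * \sum_(D : {ffun 'I_n.+1 -> S * S}) (\prod_i w (D i)) *
     ee tt (n.+1%:R^-1 *: \sum_i g (D i) tt) <= n.+1%:R * D0.
  by apply: (le_trans H); lra.
by rewrite ler_pM2l ?ltr0Sn in H2.
Qed.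

Lemma epoch_bound (M n : nat) tt D0 : M%:R = 32 / lam -> 0 < D0 ->
  4 * f tt + 2 * sigma2 P mu phi r gamma <= n%:R * D0 ->
  epochE P mu phi r gamma (1 / 16) M n tt f
    <= 3 / 5 * f tt + (8 / 5 * lam^-1 + 1 / 10) * D0.
Proof.
move=> HM D00 HnD.
set K := (8 / 5 * lam^-1 + 1 / 10).
have li : 0 < lam^-1 by rewrite invr_gt0.
have K0 : 0 <= K by rewrite /K; lra.
rewrite /epochE.
apply: (le_trans (y := \sum_(D : {ffun 'I_n -> S * S}) (\prod_i w (D i)) *
     (3 / 5 * f tt + K * ee tt (n%:R^-1 *: \sum_i g (D i) tt)))).
  apply: ler_sum => D _; apply: ler_wpM2l.
    by apply: prodr_ge0 => i _; apply: w_ge0.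
  exact: (inner_avg tt (n%:R^-1 *: \sum_i g (D i) tt) HM).
under eq_bigr do rewrite mulrDr [_ * (K * _)]mulrCA.
rewrite big_split /= -!mulr_suml (sum_ffun_mass w_sum) mul1r -mulr_sumr.
rewrite lerD2l ler_wpM2l //.
exact: batch_E.
Qed.

Lemma f_ge0 th : 0 <= f th.
Proof.
rewrite fE; apply: le_trans (posdef _ Hlam).
by rewrite mulr_ge0 ?dotv_ge0 // ltW.
Qed.

Lemma mass_affine k (Y : {ffun 'I_k -> S * S} -> R) a b :
  \sum_(W : {ffun 'I_k -> S * S}) (\prod_i w (W i)) * (a * Y W + b)
   = a * \sum_(W : {ffun 'I_k -> S * S}) (\prod_i w (W i)) * Y W + b.
Proof.
under eq_bigr do rewrite mulrDr mulrCA.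
by rewrite big_split /= -mulr_sumr -mulr_suml (sum_ffun_mass w_sum) mul1r.
Qed.

Lemma epochE_mono al (M n : nat) tt h1 h2 : (forall x, h1 x <= h2 x) ->
  epochE P mu phi r gamma al M n tt h1 <= epochE P mu phi r gamma al M n tt h2.
Proof.
move=> H; rewrite /epochE; apply: ler_sum => D _; apply: ler_wpM2l.
  by apply: prodr_ge0 => i _; apply: w_ge0.
apply: ler_sum => W _; apply: ler_wpM2l.
  by apply: prodr_ge0 => i _; apply: w_ge0.
apply: ler_wpM2l; first by rewrite invr_ge0 ler0n.
by apply: ler_sum => t _; apply: H.
Qed.

Lemma epochE_affine al (M n : nat) tt h a b : (0 < M)%N ->
  epochE P mu phi r gamma al M n tt (fun x => a * h x + b)
   = a * epochE P mu phi r gamma al M n tt h + b.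
Proof.
move=> M0; rewrite /epochE -mass_affine; apply: eq_bigr => D _; congr (_ * _).
rewrite -mass_affine; apply: eq_bigr => W _; congr (_ * _).
rewrite big_split /= -mulr_sumr sumr_const card_ord mulrDr mulrCA; congr (_ + _).
by rewrite -[b *+ M]mulr_natr mulrCA mulVf ?mulr1 // pnatr_eq0 -lt0n.
Qed.

Lemma EE_mono al M nb m th0 h1 h2 : (forall x, h1 x <= h2 x) ->
  expect_epochs P mu phi r gamma al M nb m th0 h1
   <= expect_epochs P mu phi r gamma al M nb m th0 h2.
Proof.
elim: m h1 h2 => [|m IH] h1 h2 H /=; first exact: H.
by apply: IH => x; apply: epochE_mono.
Qed.

Lemma EE_ext al M nb m th0 h1 h2 : (forall x, h1 x = h2 x) ->
  expect_epochs P mu phi r gamma al M nb m th0 h1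
   = expect_epochs P mu phi r gamma al M nb m th0 h2.
Proof.
move=> H; apply/le_anti/andP; split; apply: EE_mono => x; rewrite H //.
Qed.

Lemma EE_affine al M nb m th0 h a b : (0 < M)%N ->
  expect_epochs P mu phi r gamma al M nb m th0 (fun x => a * h x + b)
   = a * expect_epochs P mu phi r gamma al M nb m th0 h + b.
Proof.
move=> M0; elim: m h a b => [|m IH] h a b //=.
rewrite -IH; apply: EE_ext => x; exact: epochE_affine.
Qed.

End Alg.


Unset Implicit Arguments.

Theorem theorem2 (R : realType) (S : finType) (d : nat)
  (P : S -> S -> R) (mu : S -> R) (phi : S -> 'cV[R]_d) (r : S -> S -> R)
  (gamma : R) (lamA c : R) (M : nat) (th0 : 'cV[R]_d) :
  stochastic P -> irreducible P -> aperiodic P -> stationary P mu ->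
  (forall s, dotv (phi s) (phi s) <= 1) ->
  0 <= gamma -> gamma < 1 ->
  A_e P mu phi gamma \in unitmx ->
  is_min_eigenvalue ((1 / 2 : R) *: (A_e P mu phi gamma + (A_e P mu phi gamma)^T)) lamA ->
  0 < lamA ->
  M%:R = 32 / lamA ->
  0 < c ->
  let fe := f_e P mu phi r gamma in
  let nb := fun (m : nat) (th : 'cV[R]_d) =>
    `|Num.ceil ((4 * fe th + 2 * sigma2 P mu phi r gamma)
                 / (c * lamA * (2 / 3) ^+ m))|%N in
  exists C1 : R, forall m : nat,
    expect_epochs P mu phi r gamma (1 / 16) M nb m th0 fe
      <= (2 / 3) ^+ m * (fe th0 + C1).
Proof.
move=> Hst _ _ Hstat Hphi Hg0 Hg1 HAu Hlam Hlam0 HM c0 fe nb.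
have M0 : (0 < M)%N.
  by rewrite -(ltr0n R) HM divr_gt0.
pose K := 8 / 5 * lamA^-1 + 1 / 10.
have li : 0 < lamA^-1 by rewrite invr_gt0.
have K0 : 0 <= K by rewrite /K; lra.
pose Kc := K * (c * lamA).
have Kc0 : 0 <= Kc by rewrite /Kc mulr_ge0 // mulr_ge0 // ltW.
have fe0 : forall th, 0 <= fe th by move=> th; apply: (f_ge0 _ Hlam Hlam0).
have Hep : forall m th, epochE P mu phi r gamma (1 / 16) M (nb m th) th fe
    <= 3 / 5 * fe th + Kc * (2 / 3) ^+ m.
  move=> m th.
  have D0 : 0 < c * lamA * (2 / 3) ^+ m by rewrite !mulr_gt0 // exprn_gt0 // divr_gt0.
  have H := epoch_bound Hst Hstat HAu Hphi Hg0 Hg1 Hlam Hlam0 (r := r) (tt := th) (n := nb m th) HM D0.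
  apply: (le_trans (H _)); last by rewrite -/K /Kc !mulrA.
  set q := (4 * fe th + 2 * sigma2 P mu phi r gamma).
  have -> : q = q / (c * lamA * (2 / 3) ^+ m) * (c * lamA * (2 / 3) ^+ m).
    by rewrite divfK // gt_eqF.
  apply: ler_wpM2r; first exact: ltW.
  rewrite /nb -/q natr_absz.
  apply: (le_trans (ceil_ge _)); rewrite ler_int; exact: ler_norm.
exists (10 * Kc).
elim=> [|m IH] /=.
  by rewrite expr0 mul1r lerDl mulr_ge0.
apply: (le_trans (EE_mono _ _ _ Hst Hstat _ _ _ _ _ (fun th => Hep m.+1 th))).
rewrite (EE_affine _ _ _ Hst Hstat _ _ _ _ _ _ _ M0).
have t0 : 0 < (2 / 3 : R) ^+ m by rewrite exprn_gt0 // divr_gt0.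
have h1 : 0 <= (2 / 3 : R) ^+ m * fe th0 by rewrite mulr_ge0 // ltW.
have h2 : 0 <= (2 / 3 : R) ^+ m * Kc by rewrite mulr_ge0 // ltW.
move: IH h1 h2; rewrite exprS; set t := (2 / 3 : R) ^+ m.
set Y := expect_epochs _ _ _ _ _ _ _ _ _ _ _ => IH h1 h2.
lra.
Qed.
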